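(* For every state $\rho\in\mathsf{St}(S)$, $$\mathsf{Erg}(\rho)\le \mathsf A_w(\rho)\,\max_{\sigma\in\mathsf{St}(S):\ \mathrm{Supp}(\sigma)\subseteq\mathrm{Supp}(\rho)}\mathsf{Erg}(\sigma)$$ and $$\mathsf{Erg}(\rho)\le\min\{\mathsf A_r(\rho),1\}\,(E_{i_{\max}}-E_1),$$ where $i_{\max}=\max\{i:\langle i|\rho|i\rangle\neq0\}$.
   Context: $S$ is a $d$-dimensional quantum system with non-degenerate Hamiltonian $H=\sum_i E_i|i\rangle\langle i|$, $E_1<\dots<E_d$. $\mathsf{St}(S)$ is the set of density matrices; $\mathrm{Supp}$ denotes the support (range). Ergotropy: $\mathsf{Erg}(\rho)=\mathrm{Tr}[H\rho]-\min_U\mathrm{Tr}[HU\rho U^\dagger]$ over unitaries $U$. $\mathsf P(S)$ is the set of passive states, i.e. states $\sum_i p_i|i\rangle\langle i|$ with $p_1\ge\dots\ge p_d$. Activity weight: $\mathsf A_w(\rho)=\min\{t\ge0:\ \rho=t\sigma+(1-t)\tau,\ \sigma\in\mathsf{St}(S),\ \tau\in\mathsf P(S)\}$. Robustness of activity: $\mathsf A_r(\rho)=\min\{t\ge0:\ \exists\sigma\in\mathsf{St}(S),\ (\rho+t\sigma)/(1+t)\in\mathsf P(S)\}$. *)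

(* Defs.v *)
From mathcomp Require Import all_boot all_algebra.
From mathcomp Require Import classical_sets reals.
From mathcomp Require Import complex.
Set Implicit Arguments. Unset Strict Implicit. Unset Printing Implicit Defensive.
Import GRing.Theory Num.Theory.
Local Open Scope ring_scope.
Local Open Scope classical_set_scope.
Local Open Scope sesquilinear_scope.

Section Defs.
Variables (R : realType) (n : nat).
(* the system has dimension d = n.+1; levels are indexed by 'I_(n.+1) (i.e. |1>,...,|d>
   correspond to ord 0 .. ord n) *)
Local Notation C := R[i].
Local Notation M := 'M[C]_n.+1.

Definition hamiltonian (E : 'I_n.+1 -> R) : M :=
  diag_mx (\row_i ((E i)%:C)%C).

Definition is_state (rho : M) : Prop :=
  rho ^t* = rho /\
  (forall v : 'cV[C]_n.+1, 0 <= (v ^t* *m rho *m v) 0 0) /\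
  \tr rho = 1.

(* Tr[H rho] (real part; it is real for Hermitian rho) *)
Definition energy (E : 'I_n.+1 -> R) (rho : M) : R :=
  complex.Re (\tr (hamiltonian E *m rho)).

Definition ergotropy (E : 'I_n.+1 -> R) (rho : M) : R :=
  energy E rho -
  inf [set energy E (U *m rho *m U ^t*) | U in [set U : M | U \is unitarymx]].

Definition is_passive (tau : M) : Prop :=
  is_state tau /\
  exists p : 'I_n.+1 -> R,
    (forall i j : 'I_n.+1, (i <= j)%N -> p j <= p i) /\
    tau = diag_mx (\row_i ((p i)%:C)%C).

Definition activity_weight (rho : M) : R :=
  inf [set t : R | 0 <= t /\
        exists sigma tau : M, is_state sigma /\ is_passive tau /\
          rho = (t%:C)%C *: sigma + ((1 - t)%:C)%C *: tau].

Definition activity_robustness (rho : M) : R :=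
  inf [set t : R | 0 <= t /\
        exists sigma : M, is_state sigma /\
          is_passive (((1 + t)%:C)%C^-1 *: (rho + (t%:C)%C *: sigma))].

(* Supp(sigma) ⊆ Supp(rho): column space (range) inclusion *)
Definition supp_sub (sigma rho : M) : Prop := (sigma^T <= rho^T)%MS.

Definition max_erg_supp (E : 'I_n.+1 -> R) (rho : M) : R :=
  sup [set ergotropy E sigma | sigma in [set sigma : M | is_state sigma /\ supp_sub sigma rho]].

Definition imax (rho : M) : nat := \max_(i : 'I_n.+1 | rho i i != 0) (i : nat).

End Defs.

(* Main.v *)
Require Import Defs.
From mathcomp Require Import all_boot all_algebra.
From mathcomp Require Import classical_sets reals.
From mathcomp Require Import complex.
From mathcomp Require Import ring lra.
Import GRing.Theory Num.Theory.
From mathcomp Require Import order.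
Import Order.TTheory.
Set Implicit Arguments. Unset Strict Implicit. Unset Printing Implicit Defensive.
Local Open Scope ring_scope.
Local Open Scope sesquilinear_scope.

Section NatLemmas.
Variable R : realFieldType.

Lemma abel (m : nat) (e a : nat -> R) :
  \sum_(i < m.+1) e i * a i =
  e m * \sum_(i < m.+1) a i - \sum_(j < m) (e j.+1 - e j) * \sum_(i < j.+1) a i.
Proof.
elim: m => [|m IH].
  by rewrite !big_ord1 big_ord0 subr0.
rewrite [LHS]big_ord_recr /= IH.
rewrite [\sum_(j < m.+1) (e j.+1 - e j) * _]big_ord_recr /=.
rewrite [\sum_(i < m.+2) a i]big_ord_recr /=.
ring.
Qed.

Lemma abel_bound (m : nat) (e a g : nat -> R) :
  (forall j, (j < m)%N -> e j <= e j.+1) ->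
  \sum_(i < m.+1) a i = 0 ->
  (forall j, (j < m)%N -> - \sum_(i < j.+1) a i <= g j) ->
  \sum_(i < m.+1) e i * a i <= \sum_(j < m) (e j.+1 - e j) * g j.
Proof.
move=> he ha hg; rewrite abel ha mulr0 sub0r -sumrN.
apply: ler_sum => j _; rewrite -mulrN; apply: ler_wpM2l.
  by rewrite subr_ge0; apply: he.
exact: hg.
Qed.

Lemma telescope_ind (m k : nat) (e : nat -> R) (D : R) : (k <= m)%N ->
  \sum_(j < m) (e j.+1 - e j) * (if (j < k)%N then D else 0) = D * (e k - e 0%N).
Proof.
move=> km.
transitivity (\sum_(j < m | (j < k)%N) (e j.+1 - e j) * D).
  by rewrite [RHS]big_mkcond /=; apply: eq_bigr => j _; case: ifP => _; rewrite ?mulr0.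
rewrite -(big_ord_widen _ (fun j => (e j.+1 - e j) * D) km) -mulr_suml mulrC; congr (_ * _).
by rewrite -(big_mkord xpredT (fun j => e j.+1 - e j)) telescope_sumr.
Qed.

Lemma widen_sum (m j : nat) (x : nat -> R) : (j < m)%N ->
  \sum_(i < j.+1) x i = \sum_(l < m) (if (l <= j)%N then x l else 0).
Proof.
move=> jm; rewrite (big_ord_widen m x jm) big_mkcond /=.
by apply: eq_bigr => l _; rewrite ltnS.
Qed.

Lemma major (m : nat) (b : nat -> nat -> R) (p : nat -> R) (j : nat) :
  (forall i l, 0 <= b i l) ->
  (forall i, (i < m)%N -> \sum_(l < m) b i l = 1) ->
  (forall l, (l < m)%N -> \sum_(i < m) b i l = 1) ->
  (forall l l', (l <= l')%N -> (l' < m)%N -> p l' <= p l) ->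
  (j < m)%N ->
  \sum_(i < j.+1) \sum_(l < m) b i l * p l <= \sum_(i < j.+1) p i.
Proof.
move=> b0 hrow hcol hp jm.
pose w l := \sum_(i < j.+1) b i l.
pose c l : R := if (l <= j)%N then 1 else 0.
have -> : \sum_(i < j.+1) \sum_(l < m) b i l * p l = \sum_(l < m) w l * p l.
  by rewrite exchange_big /=; apply: eq_bigr => l _; rewrite /w mulr_suml.
have -> : \sum_(i < j.+1) p i = \sum_(l < m) c l * p l.
  by rewrite (widen_sum p jm); apply: eq_bigr => l _; rewrite /c; case: ifP; rewrite ?mul1r ?mul0r.
have sw : \sum_(l < m) w l = \sum_(l < m) c l.
  rewrite /w exchange_big /=.
  rewrite (eq_bigr (fun _ => 1)); last by move=> i _; apply: hrow; exact: (leq_trans (ltn_ord i)).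
  exact: (widen_sum (fun _ => (1:R)) jm).
have w1 : forall l, (l < m)%N -> w l <= 1.
  move=> l lm; rewrite -(hcol l lm) /w (widen_sum (fun i => b i l) jm).
  by apply: ler_sum => i _; case: ifP.
have w0 : forall l, 0 <= w l by move=> l; apply: sumr_ge0 => i _.
rewrite -subr_le0.
have -> : \sum_(l < m) w l * p l - \sum_(l < m) c l * p l =
   \sum_(l < m) (p l - p j) * (w l - c l).
  have -> : \sum_(l < m) (p l - p j) * (w l - c l) =
     \sum_(l < m) (w l * p l - c l * p l) - \sum_(l < m) p j * (w l - c l).
    by rewrite -sumrB; apply: eq_bigr => l _; ring.
  by rewrite -mulr_sumr [\sum_(l < m) (w l - c l)]sumrB sw subrr mulr0 subr0 sumrB.
apply: sumr_le0 => l _.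
rewrite /c; case: ifP => hl.
  apply: mulr_ge0_le0; first by rewrite subr_ge0; apply: hp.
  by rewrite subr_le0; apply: w1.
apply: mulr_le0_ge0; last by rewrite subr0.
rewrite subr_le0; apply: hp => //; by rewrite ltnW // ltnNge hl.
Qed.

End NatLemmas.

Section Work.
Variable R : realType.
Local Notation C := R[i].
Local Notation Re := complex.Re.
Local Notation Im := complex.Im.

Lemma ReD (x y : C) : Re (x + y) = Re x + Re y.
Proof. by case: x => a b; case: y => c d. Qed.
Lemma ImD (x y : C) : Im (x + y) = Im x + Im y.
Proof. by case: x => a b; case: y => c d. Qed.
Lemma ReN (x : C) : Re (- x) = - Re x.
Proof. by case: x => a b. Qed.
Lemma ImN (x : C) : Im (- x) = - Im x.
Proof. by case: x => a b. Qed.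
Lemma ReB (x y : C) : Re (x - y) = Re x - Re y.
Proof. by rewrite ReD ReN. Qed.
Lemma ImB (x y : C) : Im (x - y) = Im x - Im y.
Proof. by rewrite ImD ImN. Qed.
Lemma Re_sum (I : Type) (r : seq I) (P : pred I) (F : I -> C) :
  Re (\sum_(i <- r | P i) F i) = \sum_(i <- r | P i) Re (F i).
Proof. by apply: (big_morph _ ReD). Qed.
Lemma Im_sum (I : Type) (r : seq I) (P : pred I) (F : I -> C) :
  Im (\sum_(i <- r | P i) F i) = \sum_(i <- r | P i) Im (F i).
Proof. by apply: (big_morph _ ImD). Qed.
Lemma ReMr (x : R) (z : C) : Re (x%:C%C * z) = x * Re z.
Proof. case: z => a b /=; ring. Qed.
Lemma ImMr (x : R) (z : C) : Im (x%:C%C * z) = x * Im z.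
Proof. case: z => a b /=; ring. Qed.
Lemma ReM (x y : C) : Re (x * y) = Re x * Re y - Im x * Im y.
Proof. by case: x => a b; case: y => c d. Qed.
Lemma ImM (x y : C) : Im (x * y) = Re x * Im y + Im x * Re y.
Proof. by case: x => a b; case: y => c d /=; ring. Qed.
Lemma Re_conj (x : C) : Re (Num.conj x) = Re x.
Proof. by case: x. Qed.
Lemma Im_conj (x : C) : Im (Num.conj x) = - Im x.
Proof. by case: x. Qed.
Lemma Re_real (x : R) : Re (x%:C%C : C) = x. Proof. by []. Qed.
Lemma Im_real (x : R) : Im (x%:C%C : C) = 0. Proof. by []. Qed.
Lemma Re1 : Re (1 : C) = 1. Proof. by []. Qed.
Lemma Re0 : Re (0 : C) = 0. Proof. by []. Qed.
Lemma Im0 : Im (0 : C) = 0. Proof. by []. Qed.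
Lemma ge0C (z : C) : (0 <= z) = (Im z == 0) && (0 <= Re z).
Proof. by rewrite lecE. Qed.
Lemma Re_normsq (z : C) : Re (Num.conj z * z) = Re z ^+ 2 + Im z ^+ 2.
Proof. case: z => a b /=; ring. Qed.
Lemma Im_normsq (z : C) : Im (Num.conj z * z) = 0.
Proof. case: z => a b /=; ring. Qed.
Lemma conj_real (x : R) : Num.conj (x%:C%C : C) = x%:C%C.
Proof. by apply/eqP; rewrite eq_complex /= oppr0 !eqxx. Qed.


Variable n : nat.
Local Notation d := n.+1.
Local Notation M := 'M[C]_d.
Local Notation V := 'cV[C]_d.
Implicit Types (X U rho sigma : M) (v : V).

Definition form (X : M) (a b : V) : C := (a ^t* *m X *m b) 0 0.

Lemma formE X a b :
  form X a b = \sum_j \sum_i Num.conj (a i 0) * X i j * b j 0.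
Proof.
rewrite /form mxE; apply: eq_bigr => j _; rewrite mxE big_distrl /=.
by apply: eq_bigr => i _; rewrite !mxE.
Qed.

Lemma formDl X a a' b : form X (a + a') b = form X a b + form X a' b.
Proof.
rewrite !formE -big_split; apply: eq_bigr => j _; rewrite -big_split.
by apply: eq_bigr => i _ /=; rewrite mxE rmorphD /= !mulrDl.
Qed.
Lemma formDr X a b b' : form X a (b + b') = form X a b + form X a b'.
Proof.
rewrite !formE -big_split; apply: eq_bigr => j _; rewrite -big_split.
by apply: eq_bigr => i _ /=; rewrite mxE !mulrDr.
Qed.
Lemma formZl X s a b : form X (s *: a) b = Num.conj s * form X a b.
Proof.
rewrite !formE mulr_sumr; apply: eq_bigr => j _; rewrite mulr_sumr.
by apply: eq_bigr => i _ /=; rewrite mxE rmorphM /= !mulrA.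
Qed.
Lemma formZr X s a b : form X a (s *: b) = s * form X a b.
Proof.
rewrite !formE mulr_sumr; apply: eq_bigr => j _; rewrite mulr_sumr.
apply: eq_bigr => i _ /=; rewrite mxE; ring.
Qed.
Lemma formNl X a b : form X (- a) b = - form X a b.
Proof. by rewrite -scaleN1r formZl rmorphN1 mulN1r. Qed.
Lemma formNr X a b : form X a (- b) = - form X a b.
Proof. by rewrite -scaleN1r formZr mulN1r. Qed.
Lemma formBl X a a' b : form X (a - a') b = form X a b - form X a' b.
Proof. by rewrite formDl formNl. Qed.
Lemma formBr X a b b' : form X a (b - b') = form X a b - form X a b'.
Proof. by rewrite formDr formNr. Qed.

Lemma form_delta X (i j : 'I_d) :
  form X (delta_mx i 0) (delta_mx j 0) = X i j.
Proof.
rewrite formE (bigD1 j) //= [X in _ + X]big1 ?addr0; last first.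
  move=> k /negPf kj; apply: big1 => l _; by rewrite [delta_mx j 0 k 0]mxE kj /= mulr0.
rewrite (bigD1 i) //= [X in _ + X]big1 ?addr0; last first.
  by move=> k /negPf ki; rewrite [delta_mx i 0 k 0]mxE ki /= rmorph0 !mul0r.
by rewrite !mxE !eqxx /= rmorph1 mul1r mulr1.
Qed.

Definition herm (X : M) := X ^t* = X.

Lemma herm_entry X i j : herm X -> X i j = Num.conj (X j i).
Proof. by move=> h; rewrite -{1}h !mxE. Qed.

Lemma form_sym X a b : herm X -> form X b a = Num.conj (form X a b).
Proof.
move=> hX; rewrite !formE rmorph_sum /= exchange_big /=.
apply: eq_bigr => j _; rewrite rmorph_sum; apply: eq_bigr => i _ /=.
rewrite !rmorphM /= conjCK (herm_entry _ _ hX); ring.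
Qed.

Definition is_psd (X : M) := forall v : V, 0 <= form X v v.

Lemma state_psd X : is_state X -> is_psd X.
Proof. by case=> _ [h _]. Qed.
Lemma state_herm X : is_state X -> herm X.
Proof. by case. Qed.

Lemma psd_diag X i : is_psd X -> 0 <= X i i.
Proof. by move=> h; have := h (delta_mx i 0); rewrite form_delta. Qed.

Lemma psd_diag_Re X i : is_psd X -> 0 <= Re (X i i).
Proof. by move=> /(psd_diag i); rewrite ge0C => /andP[]. Qed.

Lemma state_tr X : is_state X -> \sum_i Re (X i i) = 1.
Proof. by case=> _ [_ h]; rewrite -Re_sum; move: h; rewrite /mxtrace => ->. Qed.

Definition cj (U X : M) := U *m X *m U ^t*.

Lemma unitary_l (U : M) : U \is unitarymx -> U ^t* *m U = 1%:M.
Proof.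
rewrite -trmxC_unitary => /unitarymxP; by rewrite trmxCK.
Qed.
Lemma unitary_r (U : M) : U \is unitarymx -> U *m U ^t* = 1%:M.
Proof. by move/unitarymxP. Qed.

Lemma form_cj U X v : form (cj U X) v v = form X (U ^t* *m v) (U ^t* *m v).
Proof.
by rewrite /form /cj trmx_mul map_mxM trmxCK !mulmxA.
Qed.

Lemma state_cj U X : U \is unitarymx -> is_state X -> is_state (cj U X).
Proof.
move=> hU [hh [hp ht]]; split; last split.
- by rewrite /cj !trmx_mul !map_mxM trmxCK hh mulmxA.
- by move=> v; rewrite -/(form _ _ _) form_cj; apply: hp.
- by rewrite /cj mxtrace_mulC mulmxA unitary_l // mul1mx.
Qed.

Lemma energyE E X : energy E X = \sum_i E i * Re (X i i).
Proof.
rewrite /energy /hamiltonian mul_diag_mx /mxtrace Re_sum.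
by apply: eq_bigr => i _; rewrite !mxE ReMr.
Qed.


Variable E : 'I_d -> R.
Hypothesis HE : forall i j : 'I_d, (i < j)%N -> E i < E j.

Lemma HEle (i j : 'I_d) : (i <= j)%N -> E i <= E j.
Proof.
rewrite leq_eqVlt => /orP[/eqP h|h]; last exact/ltW/HE.
by have -> : i = j by apply: val_inj.
Qed.

Lemma energy_lb X : is_state X -> E ord0 <= energy E X.
Proof.
move=> hX; rewrite energyE -[E ord0]mulr1 -(state_tr hX) mulr_sumr.
apply: ler_sum => i _; apply: ler_wpM2r; first exact/psd_diag_Re/state_psd.
exact: HEle.
Qed.

Lemma energy_ub X : is_state X -> energy E X <= E ord_max.
Proof.
move=> hX; rewrite energyE -[E ord_max]mulr1 -(state_tr hX) mulr_sumr.
apply: ler_sum => i _; apply: ler_wpM2r; first exact/psd_diag_Re/state_psd.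
by apply: HEle; rewrite -ltnS.
Qed.

Lemma unitary1 : (1%:M : M) \is unitarymx.
Proof. by apply/unitarymxP; rewrite trmx1 map_mx1 mulmx1. Qed.

Lemma cj1 X : cj 1%:M X = X.
Proof. by rewrite /cj trmx1 map_mx1 mul1mx mulmx1. Qed.

Lemma erg_le X a :
  (forall U, U \is unitarymx -> energy E X - a <= energy E (cj U X)) ->
  ergotropy E X <= a.
Proof.
move=> h; rewrite /ergotropy.
suff : energy E X - a <= inf [set energy E (U *m X *m U ^t*) | U in [set U : M | U \is unitarymx]].
  by move=> H; rewrite lerBlDr -lerBlDl.
apply: lb_le_inf.
  by exists (energy E X), 1%:M; [exact: unitary1 | rewrite -/(cj _ _) cj1].
by move=> y [U hU <-]; apply: h.
Qed.

Lemma erg_inf X U : is_state X -> U \is unitarymx ->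
  energy E X - ergotropy E X <= energy E (cj U X).
Proof.
move=> hX hU; rewrite /ergotropy opprB addrC subrK.
apply: ge_inf; last by exists U.
exists (E ord0) => y [V hV <-]; apply: energy_lb; exact: state_cj.
Qed.

Lemma erg_ge0 X : is_state X -> 0 <= ergotropy E X.
Proof.
move=> hX; have := erg_inf hX unitary1; rewrite cj1.
by rewrite lerBlDr lerDl.
Qed.

Lemma erg_ub X : is_state X -> ergotropy E X <= E ord_max - E ord0.
Proof.
move=> hX; apply: erg_le => U hU.
have h1 := energy_ub hX; have h2 := energy_lb (state_cj hU hX).
rewrite opprB; lra.
Qed.


Lemma sum_inord (F : 'I_d -> R) : \sum_(i < d) F i = \sum_(i < d) F (inord i).
Proof. by apply: eq_bigr => i _; rewrite inord_val. Qed.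

Definition dmx (p : 'I_d -> R) : M := diag_mx (\row_k (p k)%:C%C).

Lemma cj_diag_entry U p i :
  Re ((cj U (dmx p)) i i) = \sum_k p k * Re (Num.conj (U i k) * U i k).
Proof.
rewrite /cj /dmx mxE Re_sum; apply: eq_bigr => k _.
rewrite mul_mx_diag !mxE.
have -> : U i k * (p k)%:C%C * Num.conj (U i k) = (p k)%:C%C * (Num.conj (U i k) * U i k) by ring.
by rewrite ReMr.
Qed.

Lemma unit_row U i : U \is unitarymx -> \sum_k Re (Num.conj (U i k) * U i k) = 1.
Proof.
move=> hU; have := congr1 (fun A : M => A i i) (unitary_r hU).
rewrite !mxE eqxx /= => h.
transitivity (Re (\sum_k U i k * (U ^t*) k i)); last by rewrite h.
by rewrite Re_sum; apply: eq_bigr => k _; rewrite !mxE mulrC.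
Qed.

Lemma unit_col U l : U \is unitarymx -> \sum_k Re (Num.conj (U k l) * U k l) = 1.
Proof.
move=> hU; have := congr1 (fun A : M => A l l) (unitary_l hU).
rewrite !mxE eqxx /= => h.
transitivity (Re (\sum_k (U ^t*) l k * U k l)); last by rewrite h.
by rewrite Re_sum; apply: eq_bigr => k _; rewrite !mxE.
Qed.

Lemma passive_partial U (p : 'I_d -> R) (j : nat) :
  U \is unitarymx ->
  (forall i k : 'I_d, (i <= k)%N -> p k <= p i) -> (j < d)%N ->
  \sum_(i < j.+1) Re ((cj U (dmx p)) (inord i) (inord i)) <= \sum_(i < j.+1) p (inord i).
Proof.
move=> hU hp jd.
pose b i l := Re (Num.conj (U (inord i) (inord l)) * U (inord i) (inord l)).
have -> : \sum_(i < j.+1) Re ((cj U (dmx p)) (inord i) (inord i)) =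
          \sum_(i < j.+1) \sum_(l < d) b i l * p (inord l).
  apply: eq_bigr => i _; rewrite cj_diag_entry sum_inord.
  by apply: eq_bigr => l _; rewrite mulrC.
have h0 : forall i l, 0 <= b i l.
  by move=> i l; rewrite /b Re_normsq addr_ge0 // sqr_ge0.
have h1 : forall i, (i < d)%N -> \sum_(l < d) b i l = 1.
  move=> i id; rewrite -(unit_row (inord i) hU) [RHS]sum_inord.
  by apply: eq_bigr => l _.
have h2 : forall l, (l < d)%N -> \sum_(i < d) b i l = 1.
  move=> l ld; rewrite -(unit_col (inord l) hU) [RHS]sum_inord.
  by apply: eq_bigr => i _.
have h3 : forall l l', (l <= l')%N -> (l' < d)%N -> p (inord l') <= p (inord l).
  by move=> l l' ll' l'd; apply: hp; rewrite !inordK // (leq_ltn_trans ll' l'd).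
have := @major R d b (fun l => p (inord l)) j h0 h1 h2 h3 jd.
by [].
Qed.

Lemma einc (j : nat) : (j < n)%N -> E (inord j) <= E (inord j.+1).
Proof.
move=> jn; apply: HEle.
have h1 : (j < d)%N by apply: (leq_trans jn).
have h2 : (j.+1 < d)%N by rewrite ltnS.
by rewrite (inordK h1) (inordK h2).
Qed.

Lemma energy_nat X : energy E X = \sum_(i < d) E (inord i) * Re (X (inord i) (inord i)).
Proof. by rewrite energyE sum_inord. Qed.

Lemma state_tr_nat X : is_state X -> \sum_(i < d) Re (X (inord i) (inord i)) = 1.
Proof. by move=> h; rewrite -(state_tr h) [RHS]sum_inord. Qed.

Lemma dmx_entry p i : Re (dmx p i i) = p i.
Proof. by rewrite /dmx !mxE eqxx mulr1n. Qed.

Lemma passive_min U p : U \is unitarymx -> is_state (dmx p) ->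
  (forall i k : 'I_d, (i <= k)%N -> p k <= p i) ->
  energy E (dmx p) <= energy E (cj U (dmx p)).
Proof.
move=> hU hs hp; rewrite -subr_le0 !energy_nat -sumrB.
pose a i := p (inord i) - Re ((cj U (dmx p)) (inord i) (inord i)).
have -> : \sum_(i < d) (E (inord i) * Re (dmx p (inord i) (inord i)) -
    E (inord i) * Re ((cj U (dmx p)) (inord i) (inord i))) =
    \sum_(i < d) E (inord i) * a i.
  by apply: eq_bigr => i _; rewrite dmx_entry mulrBr.
have h2 : \sum_(i < n.+1) a i = 0.
  rewrite sumrB (state_tr_nat (state_cj hU hs)).
  apply/eqP; rewrite subr_eq0; apply/eqP; rewrite -(state_tr_nat hs).
  by apply: eq_bigr => i _; rewrite dmx_entry.
have h3 : forall j, (j < n)%N -> - \sum_(i < j.+1) a i <= (fun _ => 0) j.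
  move=> j jn; rewrite sumrB opprB subr_le0; apply: passive_partial => //.
  exact: (leq_trans jn).
have hab := @abel_bound R n (fun j => E (inord j)) a (fun _ => 0) einc h2 h3.
apply: le_trans hab _; rewrite big1 // => j _; by rewrite mulr0.
Qed.


Lemma cj_lin U (a b : C) X Y : cj U (a *: X + b *: Y) = a *: cj U X + b *: cj U Y.
Proof. by rewrite /cj mulmxDr mulmxDl -!scalemxAr -!scalemxAl. Qed.

Lemma Re_entry_lin (a b : R) X Y i j :
  Re ((a%:C%C *: X + b%:C%C *: Y) i j) = a * Re (X i j) + b * Re (Y i j).
Proof. by rewrite !mxE ReD !ReMr. Qed.

Lemma energy_lin (a b : R) X Y :
  energy E (a%:C%C *: X + b%:C%C *: Y) = a * energy E X + b * energy E Y.
Proof.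
rewrite !energyE !mulr_sumr -big_split; apply: eq_bigr => i _ /=.
rewrite Re_entry_lin; ring.
Qed.

Lemma partial_le (x : nat -> R) (j : nat) : (forall i, (i < d)%N -> 0 <= x i) ->
  (j < d)%N -> \sum_(i < j.+1) x i <= \sum_(i < d) x i.
Proof.
move=> h jd; rewrite (widen_sum x jd); apply: ler_sum => i _.
by case: ifP => // _; apply: h.
Qed.

Lemma partial_eq (x : nat -> R) (j k : nat) :
  (forall i, (k < i)%N -> (i < d)%N -> x i = 0) -> (k <= j)%N ->
  (j < d)%N -> \sum_(i < j.+1) x i = \sum_(i < d) x i.
Proof.
move=> h kj jd; rewrite (widen_sum x jd); apply: eq_bigr => i _.
case: ifP => // hij; symmetry; apply: h => //.
by apply: leq_ltn_trans kj _; rewrite ltnNge hij.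
Qed.

Lemma inord0 : (inord 0 : 'I_d) = ord0.
Proof. by apply: val_inj; rewrite /= inordK. Qed.

Lemma core_bound rho U (D : R) (k : nat) :
  is_state rho -> U \is unitarymx -> (k < d)%N ->
  (forall i : 'I_d, (k < i)%N -> Re (rho i i) = 0) ->
  (forall j, (j < k)%N ->
    \sum_(i < j.+1) Re ((cj U rho) (inord i) (inord i)) -
    \sum_(i < j.+1) Re (rho (inord i) (inord i)) <= D) ->
  energy E rho - energy E (cj U rho) <= D * (E (inord k) - E ord0).
Proof.
move=> hr hU kd hz hD.
have hc := state_cj hU hr.
rewrite !energy_nat -sumrB.
pose a i := Re (rho (inord i) (inord i)) - Re ((cj U rho) (inord i) (inord i)).
have -> : \sum_(i < d) (E (inord i) * Re (rho (inord i) (inord i)) -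
    E (inord i) * Re ((cj U rho) (inord i) (inord i))) =
    \sum_(i < n.+1) E (inord i) * a i.
  by apply: eq_bigr => i _; rewrite mulrBr.
have h2 : \sum_(i < n.+1) a i = 0.
  by rewrite sumrB (state_tr_nat hc) (state_tr_nat hr) subrr.
have h3 : forall j, (j < n)%N -> - \sum_(i < j.+1) a i <= (fun j => if (j < k)%N then D else 0) j.
  move=> j jn; rewrite sumrB opprB /=; case: ifP => jk; first exact: hD.
  have jd : (j < d)%N by apply: (leq_trans jn).
  rewrite subr_le0.
  rewrite (partial_eq (x := fun i => Re (rho (inord i) (inord i))) (k := k)) //; last by rewrite leqNgt jk.
    rewrite (state_tr_nat hr) -(state_tr_nat hc).
    apply: (partial_le (x := fun i => Re ((cj U rho) (inord i) (inord i)))) => // i _; exact/psd_diag_Re/state_psd.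
  move=> i ki id; apply: hz; by rewrite inordK.
have hab := @abel_bound R n (fun j => E (inord j)) a _ einc h2 h3.
have kn : (k <= n)%N by rewrite -ltnS.
apply: le_trans hab _; rewrite (@telescope_ind R n k (fun j => E (inord j)) D kn).
by rewrite inord0.
Qed.


Lemma sum_lin (m : nat) (a b : R) (x y : nat -> R) :
  \sum_(i < m) (a * x i + b * y i) = a * \sum_(i < m) x i + b * \sum_(i < m) y i.
Proof. by rewrite big_split /= !mulr_sumr. Qed.

Lemma rob_step rho sigma p (t : R) U (j : nat) :
  is_state sigma -> is_state (dmx p) ->
  (forall i k : 'I_d, (i <= k)%N -> p k <= p i) -> 0 <= t ->
  rho = (1 + t)%:C%C *: dmx p + (- t)%:C%C *: sigma ->
  U \is unitarymx -> (j < d)%N ->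
  \sum_(i < j.+1) Re ((cj U rho) (inord i) (inord i)) -
  \sum_(i < j.+1) Re (rho (inord i) (inord i)) <= t.
Proof.
move=> hs hp hdec ht -> hU jd.
rewrite cj_lin.
under eq_bigr do rewrite Re_entry_lin.
under [X in _ - X <= _]eq_bigr do rewrite Re_entry_lin dmx_entry.
rewrite !big_split /= -!mulr_sumr.
have h1 := passive_partial hU hdec jd.
have h2 : \sum_(i < j.+1) Re (sigma (inord i) (inord i)) <= 1.
  rewrite -(state_tr_nat hs).
  apply: (partial_le (x := fun i => Re (sigma (inord i) (inord i)))) => // i _.
  exact/psd_diag_Re/state_psd.
have h3 : 0 <= \sum_(i < j.+1) Re ((cj U sigma) (inord i) (inord i)).
  apply: sumr_ge0 => i _; exact/psd_diag_Re/state_psd/state_cj.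
set A := \sum_(i < j.+1) Re ((cj U (dmx p)) (inord i) (inord i)) in h1 *.
set P := \sum_(i < j.+1) p (inord i) in h1 *.
set S := \sum_(i < j.+1) Re (sigma (inord i) (inord i)) in h2 *.
set Cs := \sum_(i < j.+1) Re ((cj U sigma) (inord i) (inord i)) in h3 *.
have h4 : (1 + t) * (A - P) <= 0.
  apply: mulr_ge0_le0; first lra. by rewrite subr_le0.
have h5 : t * (S - Cs) <= t * 1.
  apply: ler_wpM2l => //; lra.
lra.
Qed.

Lemma one_step rho U (j : nat) :
  is_state rho -> U \is unitarymx -> (j < d)%N ->
  \sum_(i < j.+1) Re ((cj U rho) (inord i) (inord i)) -
  \sum_(i < j.+1) Re (rho (inord i) (inord i)) <= 1.
Proof.
move=> hr hU jd.
have h1 : \sum_(i < j.+1) Re ((cj U rho) (inord i) (inord i)) <= 1.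
  rewrite -(state_tr_nat (state_cj hU hr)).
  apply: (partial_le (x := fun i => Re ((cj U rho) (inord i) (inord i)))) => // i _.
  exact/psd_diag_Re/state_psd/state_cj.
have h2 : 0 <= \sum_(i < j.+1) Re (rho (inord i) (inord i)).
  apply: sumr_ge0 => i _; exact/psd_diag_Re/state_psd.
lra.
Qed.

Lemma imax_lt rho : (imax rho < d)%N.
Proof.
rewrite /imax ltnS; apply/bigmax_leqP => i _; by rewrite -ltnS.
Qed.

Lemma imax_zero rho (i : 'I_d) : (imax rho < i)%N -> rho i i = 0.
Proof.
move=> hi; apply/eqP; apply: contraTT hi => hne.
by rewrite -leqNgt; apply: (leq_bigmax_cond (F := fun i : 'I_d => (i : nat))).
Qed.

Lemma erg_D rho (D : R) :
  is_state rho ->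
  (forall U j, U \is unitarymx -> (j < d)%N ->
    \sum_(i < j.+1) Re ((cj U rho) (inord i) (inord i)) -
    \sum_(i < j.+1) Re (rho (inord i) (inord i)) <= D) ->
  ergotropy E rho <= D * (E (inord (imax rho)) - E ord0).
Proof.
move=> hr hD; apply: erg_le => U hU.
suff : energy E rho - energy E (cj U rho) <= D * (E (inord (imax rho)) - E ord0) by lra.
apply: core_bound => //; first exact: imax_lt.
- by move=> i hi; rewrite imax_zero.
- move=> j jk; apply: hD => //; apply: leq_trans jk _; exact: ltnW (imax_lt rho).
Qed.


Lemma weight_step rho sigma p (t : R) :
  is_state sigma -> is_state (dmx p) ->
  (forall i k : 'I_d, (i <= k)%N -> p k <= p i) -> 0 <= t -> t <= 1 ->
  rho = t%:C%C *: sigma + (1 - t)%:C%C *: dmx p ->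
  ergotropy E rho <= t * ergotropy E sigma.
Proof.
move=> hs hp hdec t0 t1 ->; apply: erg_le => U hU.
rewrite cj_lin !energy_lin.
have h1 := erg_inf hs hU.
have h2 := passive_min hU hp hdec.
have h3 : t * (energy E sigma - ergotropy E sigma) <= t * energy E (cj U sigma).
  exact: ler_wpM2l.
have h4 : (1 - t) * energy E (dmx p) <= (1 - t) * energy E (cj U (dmx p)).
  by apply: ler_wpM2l => //; lra.
move: h3 h4; clear h1 h2.
move: (energy E sigma) (ergotropy E sigma) (energy E (cj U sigma)) (energy E (dmx p)) (energy E (cj U (dmx p))) => x1 x2 x3 x4 x5.
move=> h3 h4; lra.
Qed.

Lemma form_lin (a b : C) X Y u :
  form (a *: X + b *: Y) u u = a * form X u u + b * form Y u u.
Proof.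
rewrite !formE mulr_sumr [b * _]mulr_sumr -big_split; apply: eq_bigr => j _.
rewrite mulr_sumr [b * _]mulr_sumr -big_split; apply: eq_bigr => i _ /=.
rewrite !mxE; ring.
Qed.

Lemma psd_zero X u : is_psd X -> herm X -> form X u u = 0 -> X *m u = 0.
Proof.
move=> hp hh h0.
set y := X *m u.
pose N := \sum_i Num.conj (y i 0) * y i 0.
have hN : form X u y = N.
  have e : u ^t* *m X = y ^t* by rewrite /y trmx_mul map_mxM hh.
  rewrite /form e mxE; apply: eq_bigr => k _; by rewrite !mxE.
have hN' : form X y u = Num.conj N by rewrite form_sym // hN.
set a := Re N.
set Q := Re (form X y y).
have a0 : 0 <= a.
  rewrite /a /N Re_sum; apply: sumr_ge0 => i _; rewrite Re_normsq.
  exact: addr_ge0 (sqr_ge0 _) (sqr_ge0 _).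
have Q0 : 0 <= Q by rewrite /Q; move: (hp y); rewrite ge0C => /andP[].
have key : forall s : R, 0 <= 2 * s * a + s * s * Q.
  move=> s; move: (hp (u + s%:C%C *: y)); rewrite ge0C => /andP[_].
  rewrite formDl !formDr !formZl !formZr conj_real h0 hN hN' !ReD !ReMr Re_conj Re0.
  rewrite -/a -/Q.
  have -> : 2 * s * a + s * s * Q = 0 + s * a + (s * a + s * (s * Q)) by ring.
  by [].
pose s := - a / (Q + 1).
have hQ : Q + 1 != 0 by rewrite gt_eqF //; lra.
have hs : s * (Q + 1) = - a by rewrite /s -mulrA mulVf ?mulr1.
have k1 := key s.
have e2 : 2 * s * a + s * s * Q = - (s * s * (Q + 2)).
  by rewrite -(opprK a) -hs; ring.
rewrite e2 oppr_ge0 in k1.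
have s0 : s = 0 by nra.
have : a = 0 by rewrite -(opprK a) -hs s0 mul0r oppr0.
rewrite /a /N Re_sum => /(psumr_eq0P (P := xpredT)).
move=> hz.
have hz0 : forall i, true -> 0 <= Re (Num.conj (y i 0) * y i 0).
  move=> i _; rewrite Re_normsq; exact: addr_ge0 (sqr_ge0 _) (sqr_ge0 _).
have yi : forall i, y i 0 = 0.
  move=> i; have := hz hz0 i isT.
  rewrite Re_normsq => h.
  have ha : Re (y i 0) = 0 by nra.
  have hb : Im (y i 0) = 0 by nra.
  by move: (y i 0) ha hb => [r m] /= -> ->.
by apply/matrixP => i j; rewrite ord1 yi mxE.
Qed.


Lemma supp_lemma rho sigma tau (t : R) :
  is_state rho -> is_state sigma -> is_state tau -> 0 < t -> 0 <= 1 - t ->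
  rho = t%:C%C *: sigma + (1 - t)%:C%C *: tau -> supp_sub sigma rho.
Proof.
move=> hR hs ht t0 t1 hr; rewrite /supp_sub submxE.
set K := cokermx rho^T.
have hK : rho^T *m K = 0 := mulmx_coker _.
have hcol : forall k : V, rho^T *m k = 0 -> sigma^T *m k = 0.
  move=> k hk.
  set u := k ^ Num.conj.
  have hru : rho *m u = 0.
    have := congr1 (fun A => A ^ Num.conj) hk; rewrite map_mxM map_mx0.
    by rewrite (state_herm hR).
  have hf : form rho u u = 0 by rewrite /form -mulmxA hru mulmx0 mxE.
  rewrite hr form_lin in hf.
  have hs0 : 0 <= (t%:C%C : C) * form sigma u u.
    by apply: mulr_ge0; [rewrite ler0c; exact: ltW | exact: state_psd].
  have ht0 : 0 <= ((1 - t)%:C%C : C) * form tau u u.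
    by apply: mulr_ge0; [rewrite ler0c | exact: state_psd].
  move/eqP: hf; rewrite paddr_eq0 // => /andP[/eqP h1 _].
  have hfs : form sigma u u = 0.
    move/eqP: h1; rewrite mulf_eq0 => /orP[/eqP htc|/eqP //].
    by move: htc => [] /eqP; rewrite gt_eqF.
  have hsu := psd_zero (state_psd hs) (state_herm hs) hfs.
  have hc : (sigma^T *m k) ^ Num.conj = 0 by rewrite map_mxM (state_herm hs) -/u hsu.
  apply/matrixP => i j; have := congr1 (fun A : V => A i j) hc.
  by rewrite !mxE => /eqP; rewrite conjC_eq0 => /eqP ->.
apply/eqP/matrixP => i j.
have e : sigma^T *m col j K = 0.
  by apply: hcol; rewrite colE mulmxA hK mul0mx.
rewrite [RHS]mxE; transitivity ((sigma^T *m col j K) i 0); last by rewrite e mxE.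
rewrite !mxE; apply: eq_bigr => l _; by rewrite !mxE.
Qed.


Lemma ReM0 (z w : C) : Im z = 0 -> Re (z * w) = Re z * Re w.
Proof. by move=> h; rewrite ReM h mul0r subr0. Qed.

Lemma form1 v : form 1%:M v v = \sum_i Num.conj (v i 0) * v i 0.
Proof. rewrite /form mulmx1 mxE; apply: eq_bigr => k _; by rewrite !mxE. Qed.

Lemma diag_le1 X i : is_state X -> Re (X i i) <= 1.
Proof.
move=> h; rewrite -(state_tr h) (bigD1 i) //= lerDl.
apply: sumr_ge0 => k _; exact/psd_diag_Re/state_psd.
Qed.

Lemma psd_ub X v : is_state X ->
  Re (form X v v) <= (d%:R : R) * Re (form 1%:M v v).
Proof.
move=> hX.
pose x (i j : 'I_d) := Re (Num.conj (v i 0) * X i j * v j 0).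
pose y (i : 'I_d) := Re (Num.conj (v i 0) * v i 0).
have y0 : forall i, 0 <= y i.
  by move=> i; rewrite /y Re_normsq; exact: addr_ge0 (sqr_ge0 _) (sqr_ge0 _).
have hpair : forall i j, x i j + x j i <= y i + y j.
  move=> i j.
  have := state_psd hX ((v i 0) *: delta_mx i 0 - (v j 0) *: delta_mx j 0).
  rewrite formBl !formBr !formZl !formZr !form_delta ge0C => /andP[_].
  set a := v i 0; set b := v j 0.
  have -> : Num.conj a * (a * X i i) - Num.conj a * (b * X i j) -
     (Num.conj b * (a * X j i) - Num.conj b * (b * X j j)) =
     (Num.conj a * a) * X i i + (Num.conj b * b) * X j j -
     (Num.conj a * X i j * b + Num.conj b * X j i * a) by ring.
  rewrite ReB ReD ReD (ReM0 _ (Im_normsq a)) (ReM0 _ (Im_normsq b)).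
  move=> h.
  have hi : y i * Re (X i i) <= y i.
    by rewrite -{2}[y i]mulr1; apply: ler_wpM2l => //; exact: diag_le1.
  have hj : y j * Re (X j j) <= y j.
    by rewrite -{2}[y j]mulr1; apply: ler_wpM2l => //; exact: diag_le1.
  move: h hi hj; rewrite /x /y.
  move: (Re (Num.conj a * X i j * b)) (Re (Num.conj b * X j i * a)) => p q.
  move: (Re (Num.conj a * a) * Re (X i i)) (Re (Num.conj b * b) * Re (X j j)) => r s.
  move: (Re (Num.conj a * a)) (Re (Num.conj b * b)) => r' s'.
  move=> *; lra.
have hs : \sum_j \sum_i (x i j + x j i) <= \sum_j \sum_i (y i + y j).
  by apply: ler_sum => j _; apply: ler_sum => i _; apply: hpair.
have eL : \sum_j \sum_i (x i j + x j i) = 2 * \sum_j \sum_i x i j.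
  rewrite (eq_bigr (fun j => \sum_i x i j + \sum_i x j i)); last by move=> j _; rewrite big_split.
  rewrite big_split /= [\sum_j \sum_i x j i]exchange_big /=; ring.
have eR : \sum_j \sum_i (y i + y j) = 2 * (d%:R * \sum_i y i).
  rewrite (eq_bigr (fun j => \sum_i y i + d%:R * y j)); last first.
    by move=> j _; rewrite big_split /= sumr_const card_ord mulr_natl.
  rewrite big_split /= sumr_const card_ord -mulr_sumr mulr_natl; ring.
have eX : Re (form X v v) = \sum_j \sum_i x i j.
  by rewrite formE Re_sum; apply: eq_bigr => j _; rewrite Re_sum.
have eY : Re (form 1%:M v v) = \sum_i y i by rewrite form1 Re_sum.
rewrite eX eY; rewrite eL eR in hs.
move: hs; move: (\sum_j \sum_i x i j) (d%:R * \sum_i y i) => S T; lra.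
Qed.


Lemma state_dmx (p : 'I_d -> R) : (forall i, 0 <= p i) -> \sum_i p i = 1 -> is_state (dmx p).
Proof.
move=> p0 p1; split; last split.
- apply/matrixP => i j; rewrite !mxE.
  rewrite [j == i]eq_sym; case: eqP => [->|_]; first by rewrite !mulr1n conj_real.
  by rewrite !mulr0n rmorph0.
- move=> v; rewrite -/(form _ _ _) formE; apply: sumr_ge0 => j _.
  rewrite (bigD1 j) //= big1 ?addr0; last first.
    by move=> i /negPf ne; rewrite !mxE ne mulr0n mulr0 mul0r.
  rewrite !mxE eqxx mulr1n.
  have -> : Num.conj (v j 0) * (p j)%:C%C * v j 0 = (p j)%:C%C * (v j 0 * Num.conj (v j 0)) by ring.
  by apply: mulr_ge0; [rewrite ler0c | exact: mul_conjC_ge0].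
- rewrite mxtrace_diag.
  transitivity ((\sum_j p j)%:C%C : C); last by rewrite p1.
  by rewrite rmorph_sum; apply: eq_bigr => j _; rewrite mxE.
Qed.

Lemma dmx_passive (p : 'I_d -> R) : (forall i, 0 <= p i) -> \sum_i p i = 1 ->
  (forall i j : 'I_d, (i <= j)%N -> p j <= p i) -> is_passive (dmx p).
Proof. by move=> p0 p1 hd; split; [exact: state_dmx | exists p]. Qed.


Lemma conj_mulr (a : R) (z : C) : Num.conj (a%:C%C * z) = a%:C%C * Num.conj z.
Proof. case: z => x y; apply/eqP; rewrite eq_complex /= !mul0r !subr0 !addr0 mulrN !eqxx //. Qed.

Lemma conj_lin2 (a b : R) (x y : C) :
  Num.conj (a%:C%C * x + b%:C%C * y) = a%:C%C * Num.conj x + b%:C%C * Num.conj y.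
Proof.
case: x => x1 x2; case: y => y1 y2; apply/eqP; rewrite eq_complex /=.
apply/andP; split; apply/eqP; ring.
Qed.

Lemma scal1_dmx (a : R) : (a%:C%C : C) *: (1%:M : M) = dmx (fun _ => a).
Proof.
apply/matrixP => i j; rewrite !mxE.
by case: eqP => _; rewrite ?mulr1 ?mulr0 ?mulr1n ?mulr0n.
Qed.

Lemma rob_nonempty rho : is_state rho -> exists t : R, exists sigma : M,
  0 <= t /\ is_state sigma /\
  is_passive (((1 + t)%:C%C)^-1 *: (rho + t%:C%C *: sigma)).
Proof.
move=> hr.
pose c : R := d%:R.
have c0 : 0 < c by rewrite /c ltr0n.
pose t := c * c.
have t0 : 0 < t by rewrite /t mulr_gt0.
pose al := t^-1 * ((1 + t) / c).
pose be := - t^-1.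
exists t, (al%:C%C *: 1%:M + be%:C%C *: rho).
have hc : c != 0 by rewrite gt_eqF.
have ht : t != 0 by rewrite gt_eqF.
have ht1 : 1 + t != 0 by rewrite gt_eqF //; lra.
split; first exact: ltW.
split; last first.
  have -> : rho + t%:C%C *: (al%:C%C *: 1%:M + be%:C%C *: rho) =
           ((1 + t) / c)%:C%C *: (1%:M : M).
    rewrite scalerDr !scalerA -!rmorphM.
    have -> : t * al = (1 + t) / c by rewrite /al mulrA mulfV ?mul1r.
    have -> : t * be = -1 by rewrite /be mulrN mulfV.
    by rewrite rmorphN rmorph1 scaleN1r addrC subrK.
  rewrite scalerA -fmorphV -rmorphM scal1_dmx.
  apply: dmx_passive => //.
  - move=> i; rewrite mulrA mulVf // mul1r invr_ge0; exact: ltW.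
  - rewrite sumr_const card_ord mulrA mulVf // mul1r -mulr_natl -/c mulfV //.
split; last split.
- apply/matrixP => i j; rewrite !mxE conj_lin2.
  rewrite -(herm_entry i j (state_herm hr)) rmorph_nat eq_sym.
  by [].
- move=> v; rewrite -/(form _ _ _) form_lin ge0C.
  have hI1 : Im (form 1%:M v v) = 0.
    by rewrite form1 Im_sum big1 // => i _; rewrite Im_normsq.
  have := state_psd hr v; rewrite ge0C => /andP[/eqP hI2 hP].
  rewrite ImD !ImMr hI1 hI2 !mulr0 addr0 eqxx /= ReD !ReMr.
  have hub := psd_ub v hr.
  have hF : 0 <= Re (form 1%:M v v).
    by rewrite form1 Re_sum; apply: sumr_ge0 => i _; rewrite Re_normsq; exact: addr_ge0 (sqr_ge0 _) (sqr_ge0 _).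
  have e1 : al * Re (form 1%:M v v) + be * Re (form rho v v) =
            t^-1 * ((1 + t) / c * Re (form 1%:M v v) - Re (form rho v v)).
    by rewrite /al /be; ring.
  rewrite e1; apply: mulr_ge0; first by rewrite invr_ge0 ltW.
  rewrite subr_ge0; apply: le_trans hub _; apply: ler_wpM2r => //.
  rewrite ler_pdivlMr // /t; lra.
- rewrite mxtraceD !mxtraceZ mxtrace1.
  have -> : \tr rho = 1 by case: hr => _ [].
  have -> : (d%:R : C) = c%:C%C by rewrite /c rmorph_nat.
  rewrite -rmorphM mulr1 -rmorphD.
  have -> : al * c + be = 1.
    have -> : al * c = t^-1 * (1 + t) by rewrite /al -!mulrA mulVf // mulr1.
    by rewrite /be mulrDr mulr1 addrAC subrr add0r mulVf.
  by rewrite rmorph1.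
Qed.

End Work.

Local Open Scope classical_set_scope.

Theorem mainTheorem11 (R : realType) (n : nat) (E : 'I_n.+1 -> R)
  (HE : forall i j : 'I_n.+1, (i < j)%N -> E i < E j)
  (rho : 'M[R[i]]_n.+1) (Hrho : is_state rho) :
  ergotropy E rho <= activity_weight rho * max_erg_supp E rho /\
  ergotropy E rho <=
    Num.min (activity_robustness rho) 1 * (E (inord (imax rho)) - E ord0).
Proof.
split.
- set W := ergotropy E rho.
  set Mx := max_erg_supp E rho.
  have hub : has_ubound [set ergotropy E sigma | sigma in [set sigma : 'M[R[i]]_n.+1 | is_state sigma /\ supp_sub sigma rho]].
    by exists (E ord_max - E ord0) => y [s [hs _] <-]; exact: erg_ub.
  have hsup : forall sigma, is_state sigma -> supp_sub sigma rho -> ergotropy E sigma <= Mx.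
    by move=> s hs hss; apply: (ub_le_sup hub); exists s.
  have hWM : W <= Mx by apply: hsup => //; exact: submx_refl.
  have hM0 : 0 <= Mx := le_trans (erg_ge0 HE Hrho) hWM.
  pose F := [set t : R | 0 <= t /\
        exists sigma tau : 'M[R[i]]_n.+1, is_state sigma /\ is_passive tau /\
          rho = (t%:C)%C *: sigma + ((1 - t)%:C)%C *: tau].
  have feas : forall t, F t -> W <= t * Mx.
    move=> t [t0 [sigma [tau [hs [[htau [p [hdec htp]]] hr]]]]].
    have hr' : rho = t%:C%C *: sigma + (1 - t)%:C%C *: dmx p by rewrite hr htp.
    have htau' : is_state (dmx p) by rewrite /dmx -htp.
    case: (leP t 1) => ht1.
      have hw := weight_step HE hs htau' hdec t0 ht1 hr'.
      case: (eqVneq t 0) => [t_eq0|tn0].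
        by move: hw; rewrite t_eq0 !mul0r.
      apply: le_trans hw _; apply: ler_wpM2l; first exact: t0.
      apply: hsup; first exact: hs.
      apply: (supp_lemma Hrho hs htau' _ _ hr'); last by rewrite subr_ge0.
      by rewrite lt_neqAle eq_sym tn0.
    apply: le_trans hWM _; rewrite -{1}[Mx]mul1r; apply: ler_wpM2r => //; exact: ltW.
  pose e0 (i : 'I_n.+1) : R := if i == ord0 then 1 else 0.
  have Fne : F 1.
    split=> //; exists rho, (dmx e0); split=> //; split.
      apply: dmx_passive.
      + by move=> i; rewrite /e0; case: ifP.
      + rewrite (bigD1 ord0) //= big1 ?addr0 /e0 ?eqxx // => i /negPf ->; by [].
      + move=> i j ij; rewrite /e0; case: (eqVneq j ord0) => [jz|jn].
          have -> : i = ord0 by apply: val_inj; move: ij; rewrite jz /= leqn0 => /eqP.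
          by rewrite eqxx.
        by case: ifP.
    by rewrite rmorph1 scale1r subrr rmorph0 scale0r addr0.
  rewrite /activity_weight -/F.
  case: (eqVneq Mx 0) => [M0|Mn0].
    by rewrite M0 mulr0; have := feas 1 Fne; rewrite M0 mulr0.
  have Mp : 0 < Mx by rewrite lt_neqAle eq_sym Mn0.
  rewrite -ler_pdivrMr //; apply: lb_le_inf; first by exists 1.
  by move=> t Ft; rewrite ler_pdivrMr //; exact: feas.
- set W := ergotropy E rho.
  set D := E (inord (imax rho)) - E ord0.
  have D0 : 0 <= D by rewrite /D subr_ge0; apply: (HEle HE).
  have h1 : W <= 1 * D.
    by apply: (erg_D HE Hrho) => U j hU hj; exact: one_step.
  pose F := [set t : R | 0 <= t /\
        exists sigma : 'M[R[i]]_n.+1, is_state sigma /\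
          is_passive (((1 + t)%:C)%C^-1 *: (rho + (t%:C)%C *: sigma))].
  have feas : forall t, F t -> W <= t * D.
    move=> t [t0 [sigma [hs [htau [p [hdec htp]]]]]].
    have htp' : ((1 + t)%:C%C)^-1 *: (rho + t%:C%C *: sigma) = dmx p by rewrite htp.
    have htau' : is_state (dmx p) by rewrite -htp'.
    have hne : ((1 + t)%:C%C : R[i]) != 0.
      by apply/eqP => -[] /eqP; rewrite gt_eqF //; lra.
    have hr : rho = (1 + t)%:C%C *: dmx p + (- t)%:C%C *: sigma.
      have e1 : rho + t%:C%C *: sigma = (1 + t)%:C%C *: dmx p.
        by rewrite -htp' scalerA mulfV ?scale1r.
      by rewrite -e1 rmorphN scaleNr addrK.
    by apply: (erg_D HE Hrho) => U j hU hj; exact: (rob_step hs htau' hdec t0 hr).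
  have Fne : exists t, F t.
    by have [t [s [t0 [hs hp]]]] := rob_nonempty Hrho; exists t; split=> //; exists s.
  rewrite /activity_robustness -/F.
  case: (leP 1 (inf F)) => hinf.
    exact: h1.
  case: (eqVneq D 0) => [Dz|Dn0].
    by rewrite Dz mulr0; move: h1; rewrite Dz mulr0.
  have Dp : 0 < D by rewrite lt_neqAle eq_sym Dn0.
  rewrite -ler_pdivrMr //; apply: lb_le_inf => //.
  by move=> t Ft; rewrite ler_pdivrMr //; exact: feas.
Qed.
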